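(* Let $F_2$ be the free group on generators $a,b$, and let $\mathcal A=\{a,b,\bar a,\bar b\}$, where $\bar a,\bar b$ denote $a^{-1},b^{-1}$. There exist a real number $\alpha>1$, an integer $n_0\in\mathbb N$, and, for every even $n\in\mathbb N$, a set $\mathcal W_n$ of words in the alphabet $\mathcal A$ such that for all even $n$: (1) every $w\in\mathcal W_n$ has length $n$ and represents the identity element of $F_2$; (2) if $n\geq n_0$ then $|\mathcal W_n|\geq \alpha^n$; (3) for every integer $t$ with $n/4\le t<n/2$, the initial subwords (prefixes) of length $t$ of distinct words in $\mathcal W_n$ represent distinct elements of $F_2$, i.e. the map $w\mapsto$ (element of $F_2$ represented by the length-$t$ prefix of $w$) is injective on $\mathcal W_n$.
   Context: A word in $\mathcal A$ is a finite sequence of letters from $\mathcal A$; it represents the element of $F_2$ obtained by multiplying the letters, with $\bar a=a^{-1}$ and $\bar b=b^{-1}$. A word is called trivial if it represents the identity of $F_2$. *)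

(* Defs.v *)
From HB Require Import structures.
From mathcomp Require Import all_boot.
From Stdlib Require Import Reals.

Set Implicit Arguments.
Unset Strict Implicit.
Unset Printing Implicit Defensive.

Inductive letter := La | Lb | Labar | Lbbar.

Definition letter_code (x : letter) : 'I_4 :=
  match x with La => inord 0 | Lb => inord 1 | Labar => inord 2 | Lbbar => inord 3 end.
Definition letter_decode (i : 'I_4) : letter :=
  match val i with 0 => La | 1 => Lb | 2 => Labar | _ => Lbbar end.
Lemma letter_codeK : cancel letter_code letter_decode.
Proof. by case; rewrite /letter_decode /= inordK. Qed.
HB.instance Definition _ := Equality.copy letter (can_type letter_codeK).

Definition inv_letter (x : letter) : letter :=
  match x with La => Labar | Labar => La | Lb => Lbbar | Lbbar => Lb end.

Definition word := seq letter.

(* Free reduction: the unique freely reduced word equivalent to w.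
   The free group F_2 is realised as the set of freely reduced words, and a
   word w represents the element [reduce w] of F_2. *)
Definition reduce (w : word) : word :=
  foldr (fun x acc => match acc with
                      | y :: acc' => if y == inv_letter x then acc' else x :: acc
                      | [::] => [:: x]
                      end) [::] w.

Definition same_elt (u v : word) : Prop := reduce u = reduce v.

Definition trivial_word (w : word) : Prop := reduce w = [::].

(* Main.v *)
Require Import Defs.
From mathcomp Require Import all_boot.
From Stdlib Require Import Reals Lra Lia.
From mathcomp Require Import zify.

Definition posl (l : letter) : bool := if l is La then true else if l is Lb then true else false.
Definition negl (l : letter) : bool := if l is Labar then true else if l is Lbbar then true else false.

Definition redf (x : letter) (acc : word) : word :=
  match acc with
  | y :: acc' => if y == inv_letter x then acc' else x :: acc
  | [::] => [:: x]
  end.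

Lemma reduce_pos (s : word) : all posl s -> reduce s = s.
Proof.
elim: s => [|x s IH] //= /andP [px ps].
rewrite IH //.
case: s ps {IH} => [|y s] //= /andP [py _].
by case: x px; case: y py => //= _ _; case: eqP => // e; discriminate e.
Qed.

Lemma cancel_foldr (u : word) : all posl u -> forall r, all negl r ->
  foldr redf r (u ++ map inv_letter (rev u)) = r.
Proof.
elim: u => [|x u IH] //= /andP [px pu] r nr.
rewrite rev_cons map_rcons -cats1 catA foldr_cat /=.
have e1 : redf (inv_letter x) r = inv_letter x :: r.
  case: r nr => [|y r] //= /andP [ny _].
  by case: x px; case: y ny => //= _ _; case: eqP => // e; discriminate e.
rewrite e1 IH //=; last by rewrite nr andbT; clear e1; case: x px.
by rewrite eqxx.
Qed.

Fixpoint allw (k : nat) : seq word :=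
  if k is k'.+1 then map (cons La) (allw k') ++ map (cons Lb) (allw k')
  else [:: [::]].

Lemma allw_size k : size (allw k) = 2 ^ k.
Proof. elim: k => //= k IH; rewrite size_cat !size_map IH; lia. Qed.

Lemma allw_mem k v : v \in allw k -> size v = k /\ all posl v.
Proof.
elim: k v => [|k IH] v /=; first by rewrite inE => /eqP ->.
rewrite mem_cat => /orP [] /mapP [s /IH [hs ps] ->] /=; by rewrite hs ps.
Qed.

Lemma allw_uniq k : uniq (allw k).
Proof.
elim: k => //= k IH.
rewrite cat_uniq !map_inj_uniq ?IH //=; try by move=> ? ? [].
rewrite andbT; apply/hasPn => s /mapP [s' _ ->]; apply/mapP => [[s'' _]] //.
Qed.

Definition mkw (h k : nat) (v : word) : word :=
  let u := v ++ nseq (h - k) La in u ++ map inv_letter (rev u).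

Lemma nseq_pos m : all posl (nseq m La).
Proof. by elim: m. Qed.

Lemma mkw_trivial h k v : all posl v -> trivial_word (mkw h k v).
Proof.
move=> pv; rewrite /trivial_word /mkw.
have pu : all posl (v ++ nseq (h - k) La) by rewrite all_cat pv nseq_pos.
exact: (cancel_foldr _ pu [::] isT).
Qed.

Definition Wf (n : nat) : seq word := map (mkw (n %/ 2) (n %/ 4)) (allw (n %/ 4)).


Lemma mkw_take h k v t : size v = k -> k <= t -> t < h -> k <= h ->
  take t (mkw h k v) = take t (v ++ nseq (h - k) La).
Proof.
move=> sv kt th kh; rewrite /mkw take_cat size_cat size_nseq sv.
by have -> : t < k + (h - k) by lia.
Qed.

Lemma mkw_inj h k t v1 v2 : size v1 = k -> size v2 = k -> k <= t -> t < h ->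
  take t (v1 ++ nseq (h - k) La) = take t (v2 ++ nseq (h - k) La) -> v1 = v2.
Proof.
move=> s1 s2 kt th e.
have := congr1 (take k) e; rewrite !take_takel //.
by rewrite -{1}s1 -s2 !take_size_cat.
Qed.

Lemma pow_bound (n : nat) : (8 <= n)%N ->
  ((17/16) ^ n <= INR (2 ^ (n %/ 4)))%R.
Proof.
move=> hn.
set q := n %/ 8.
have h1 : ((17/16) ^ n <= (17/16) ^ (8 * q.+1))%R.
  apply: Rle_pow; first lra.
  apply/leP; rewrite /q; lia.
apply: (Rle_trans _ _ _ h1).
rewrite pow_mult pow_INR.
apply: Rle_trans (_ : (INR 2 ^ q.+1 <= _)%R).
  apply: pow_incr; split; first by apply: pow_le; lra.
  rewrite /= ; lra.
apply: Rle_pow; first by rewrite /=; lra.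
apply/leP; rewrite /q; lia.
Qed.

Theorem lemma2 :
  exists (alpha : R) (n0 : nat) (W : nat -> seq word),
    (1 < alpha)%R /\
    forall n : nat, ~~ odd n ->
      uniq (W n) /\
      (forall w, w \in W n -> size w = n /\ trivial_word w) /\
      ((n0 <= n)%N -> (alpha ^ n <= INR (size (W n)))%R) /\
      (forall t : nat, (n <= 4 * t)%N -> (2 * t < n)%N ->
         forall w1 w2, w1 \in W n -> w2 \in W n ->
           same_elt (take t w1) (take t w2) -> w1 = w2).
Proof.
exists (17/16)%R, 8, Wf; split; first lra.
move=> n hn.
have n2 : n = 2 * (n %/ 2).
  by rewrite mulnC divnK // dvdn2.
set h := n %/ 2 in n2 *; set k := n %/ 4.
have kh : k <= h by rewrite /k /h; lia.
have main : forall t, n <= 4 * t -> 2 * t < n -> forall v1 v2,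
    v1 \in allw k -> v2 \in allw k ->
    same_elt (take t (mkw h k v1)) (take t (mkw h k v2)) -> v1 = v2.
  move=> t t1 t2 v1 v2 /allw_mem [s1 p1] /allw_mem [s2 p2].
  have kt : k <= t by rewrite /k; lia.
  have th : t < h by lia.
  rewrite /same_elt !mkw_take // !reduce_pos.
  - exact: mkw_inj.
  - by apply/allP => x /mem_take; apply/allP; rewrite all_cat p2 nseq_pos.
  - by apply/allP => x /mem_take; apply/allP; rewrite all_cat p1 nseq_pos.
split.
  rewrite map_inj_in_uniq ?allw_uniq // => v1 v2 i1 i2 e.
  have [s1 _] := allw_mem _ _ i1; have [s2 _] := allw_mem _ _ i2.
  have := congr1 (take (n %/ 4)) e; rewrite /mkw -!catA.
  by rewrite -{1}s1 take_size_cat // -s2 take_size_cat.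
split.
  move=> w /mapP [v /allw_mem [sv pv] ->]; split.
    rewrite /mkw size_cat size_map size_rev size_cat size_nseq sv -/h; lia.
  exact: mkw_trivial.
split.
  by move=> hn0; rewrite /Wf size_map allw_size; apply: pow_bound.
move=> t t1 t2 w1 w2 /mapP [v1 i1 ->] /mapP [v2 i2 ->] e.
by rewrite (main t t1 t2 v1 v2 i1 i2 e).
Qed.
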